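(* Let $R$ be a finitely generated $\mathbb{C}$-algebra which is a domain, and let $r,s,r',s'\in R$. For $a,b\in R$ put $A_{a,b}:=R[U,V]/(aU-bV-1)$. If $\operatorname{rad}(r,s)=\operatorname{rad}(r',s')$ (radicals of the ideals generated by $r,s$ and by $r',s'$), then $A_{r,s}[T]\cong A_{r',s'}[T]$, where $T$ is an indeterminate. *)

(* Defs.v *)
From HB Require Import structures.
From mathcomp Require Import all_boot all_order all_algebra.
From mathcomp Require Import reals.
From mathcomp Require Import complex.

Set Implicit Arguments.
Unset Strict Implicit.
Unset Printing Implicit Defensive.

Import Order.TTheory GRing.Theory Num.Theory.
Local Open Scope ring_scope.

(* The field of complex numbers: R[i] for R : realType (every realType is
   a complete archimedean ordered field, i.e. a copy of the real numbers). *)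
Notation CC R := (complex R).

Definition fg_algebra (K A : nzRingType) (iota : K -> A) : Prop :=
  exists gens : seq A,
    forall S : A -> Prop,
      (forall c : K, S (iota c)) ->
      (forall x, x \in gens -> S x) ->
      (forall x y, S x -> S y -> S (x + y)) ->
      (forall x y, S x -> S y -> S (x * y)) ->
      forall x, S x.

Definition in_ideal2 (A : comNzRingType) (a b x : A) : Prop :=
  exists u v : A, x = u * a + v * b.

Definition in_rad2 (A : comNzRingType) (a b x : A) : Prop :=
  exists n : nat, in_ideal2 a b (x ^+ n).

Definition same_rad2 (A : comNzRingType) (a b a' b' : A) : Prop :=
  forall x : A, in_rad2 a b x <-> in_rad2 a' b' x.

(* The polynomial ring R[U,V,T], encoded as {poly {poly {poly R}}}:
   innermost variable U, middle variable V, outermost variable T. *)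
Definition PUVT (R : nzRingType) := {poly {poly {poly R}}}.

Definition cstUVT (R : nzRingType) (c : R) : PUVT R := c%:P%:P%:P.
Definition varU (R : nzRingType) : PUVT R := ('X : {poly R})%:P%:P.
Definition varV (R : nzRingType) : PUVT R := ('X : {poly {poly R}})%:P.
Definition varT (R : nzRingType) : PUVT R := 'X.

(* The generator  aU - bV - 1  of the ideal defining A_{a,b};
   A_{a,b}[T] = R[U,V,T] / (aU - bV - 1). *)
Definition relAB (R : comNzRingType) (a b : R) : PUVT R :=
  cstUVT a * varU R - cstUVT b * varV R - 1.

(* Congruence modulo the principal ideal (f) of R[U,V,T]: equality in the
   quotient ring R[U,V,T]/(f). *)
Definition cong_mod (R : comNzRingType) (f x y : PUVT R) : Prop :=
  exists q : PUVT R, x - y = q * f.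

Definition quot_RAlg_iso (R : comNzRingType) (f g : PUVT R)
    (phi : PUVT R -> PUVT R) : Prop :=
  (forall x y, cong_mod f x y -> cong_mod g (phi x) (phi y)) /\
  (forall x y, cong_mod g (phi (x + y)) (phi x + phi y)) /\
  (forall x y, cong_mod g (phi (x * y)) (phi x * phi y)) /\
  (forall c : R, cong_mod g (phi (cstUVT c)) (cstUVT c)) /\
  (forall x y, cong_mod g (phi x) (phi y) -> cong_mod f x y) /\
  (forall y, exists x, cong_mod g (phi x) y).

Definition AT_iso (R : comNzRingType) (a b a' b' : R) : Prop :=
  exists phi : PUVT R -> PUVT R, quot_RAlg_iso (relAB a b) (relAB a' b') phi.

(* Main.v *)
Require Import Defs.
From HB Require Import structures.
From mathcomp Require Import all_boot all_order all_algebra.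
From mathcomp Require Import ring zify.
From mathcomp Require Import reals complex.
Import GRing.Theory.
Local Open Scope ring_scope.
Lemma polyC_aux1 (K : comNzRingType) (x y : K) m n p :
  (x%:P)^+m * (x%:P)^+p * (y%:P)^+n = (x^+m * y^+n)%:P * (x%:P)^+p.
Proof. by rewrite polyCM !polyC_exp mulrAC. Qed.
Lemma polyC_aux2 (K : comNzRingType) (x y : K) m n p :
  (x%:P)^+m * ((y%:P)^+n * (y%:P)^+p) = (x^+m * y^+n)%:P * (y%:P)^+p.
Proof. by rewrite polyCM !polyC_exp mulrA. Qed.
Section S.
Variable R : comNzRingType.
Local Notation P := (PUVT R).
Local Notation Q := {poly {poly R}}.
Definition c3 : {rmorphism R -> P} := (@polyC {poly {poly R}} \o (@polyC {poly R} \o @polyC R))%FUN.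
Lemma cfuP (A : nzRingType) (g : {rmorphism A -> P}) (u : P) : commr_rmorph g u.
Proof. by move=> x; rewrite /GRing.comm mulrC. Qed.
Definition ev1 (u : P) : {rmorphism {poly R} -> P} := horner_morph (@cfuP _ c3 u).
Definition ev2 (u v : P) : {rmorphism Q -> P} := horner_morph (@cfuP _ (ev1 u) v).
Definition ev3 (u v t : P) : {rmorphism P -> P} := horner_morph (@cfuP _ (ev2 u v) t).
Lemma ev3C u v t c : ev3 u v t (cstUVT c) = cstUVT c.
Proof. by rewrite /ev3 /= horner_morphC /ev2 /= horner_morphC /ev1 /= horner_morphC. Qed.
Lemma ev3K u v t (x : Q) : ev3 u v t x%:P = ev2 u v x.
Proof. by rewrite /ev3 /= horner_morphC. Qed.
Lemma ev3U u v t : ev3 u v t (varU R) = u.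
Proof. by rewrite /varU ev3K /ev2 /= horner_morphC /ev1 /= horner_morphX. Qed.
Lemma ev3V u v t : ev3 u v t (varV R) = v.
Proof. by rewrite /varV ev3K /ev2 /= horner_morphX. Qed.
Lemma ev3T u v t : ev3 u v t (varT R) = t.
Proof. by rewrite /varT /ev3 /= horner_morphX. Qed.

Section Cong.
Context {h : P}.
Lemma cm_refl x : cong_mod h x x.
Proof. by exists 0; rewrite subrr mul0r. Qed.
Lemma cm_eq x y : x = y -> cong_mod h x y.
Proof. by move=> ->; apply: cm_refl. Qed.
Lemma cm_sym x y : cong_mod h x y -> cong_mod h y x.
Proof. by case=> q e; exists (- q); rewrite mulNr -e opprB. Qed.
Lemma cm_trans x y z : cong_mod h x y -> cong_mod h y z -> cong_mod h x z.
Proof.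
case=> q e [q' e']; exists (q + q'); rewrite mulrDl -e -e'; ring.
Qed.
Lemma cm_add x y x' y' : cong_mod h x y -> cong_mod h x' y' -> cong_mod h (x + x') (y + y').
Proof.
case=> q e [q' e']; exists (q + q'); rewrite mulrDl -e -e'; ring.
Qed.
Lemma cm_opp x y : cong_mod h x y -> cong_mod h (- x) (- y).
Proof. by case=> q e; exists (- q); rewrite mulNr -e; ring. Qed.
Lemma cm_mull z x y : cong_mod h x y -> cong_mod h (z * x) (z * y).
Proof. by case=> q e; exists (z * q); rewrite -mulrA -e; ring. Qed.
Lemma cm_mul x y x' y' : cong_mod h x y -> cong_mod h x' y' -> cong_mod h (x * x') (y * y').
Proof.
move=> H1 H2; apply: (@cm_trans _ (x * y')); first exact: cm_mull.
by rewrite ![_ * y']mulrC; apply: cm_mull.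
Qed.
Lemma cm_hom (H : {rmorphism P -> P}) h' x y :
  cong_mod h' (H h) 0 -> cong_mod h x y -> cong_mod h' (H x) (H y).
Proof.
case=> q e [q' e']; exists (H q' * q).
by rewrite -rmorphB e' rmorphM -mulrA -e subr0.
Qed.
End Cong.

Lemma agree2 (h : P) (H : {rmorphism P -> P}) :
  (forall c, H (cstUVT c) = cstUVT c) ->
  cong_mod h (H (varU R)) (varU R) -> cong_mod h (H (varV R)) (varV R) ->
  forall x : Q, cong_mod h (H x%:P) x%:P.
Proof.
move=> HC HU HV.
have inner : forall c : {poly R}, cong_mod h (H c%:P%:P) c%:P%:P.
  elim/poly_ind=> [|p c IH]; first by rewrite !rmorph0; apply: cm_refl.
  have -> : (p * 'X + c%:P)%:P%:P = p%:P%:P * varU R + cstUVT c.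
    by rewrite /varU /cstUVT !rmorphD !rmorphM.
  rewrite rmorphD rmorphM HC; apply: cm_add; last exact: cm_refl. exact: cm_mul IH HU.
elim/poly_ind=> [|p c IH]; first by rewrite !rmorph0; apply: cm_refl.
have -> : (p * 'X + c%:P)%:P = p%:P * varV R + c%:P%:P.
  by rewrite /varV !rmorphD !rmorphM.
rewrite rmorphD rmorphM; apply: cm_add; last exact: inner. exact: cm_mul IH HV.
Qed.

Lemma agree3 (h : P) (H : {rmorphism P -> P}) :
  (forall c, H (cstUVT c) = cstUVT c) ->
  cong_mod h (H (varU R)) (varU R) -> cong_mod h (H (varV R)) (varV R) ->
  cong_mod h (H (varT R)) (varT R) ->
  forall x : P, cong_mod h (H x) x.
Proof.
move=> HC HU HV HT.
elim/poly_ind=> [|p c IH]; first by rewrite !rmorph0; apply: cm_refl.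
rewrite rmorphD rmorphM; apply: cm_add; last exact: agree2. exact: cm_mul IH HT.
Qed.


Local Notation cst := (@cstUVT R).
Local Notation U := (varU R).
Local Notation V := (varV R).
Local Notation T := (varT R).

Definition Fmap (a b c d : Q) (r s : R) : {rmorphism P -> P} :=
  let u := a%:P + cst s * T in let v := b%:P + cst r * T in
  ev3 u v (V * ev2 u v c - U * ev2 u v d).

Lemma FmapU a b c d r s : Fmap a b c d r s U = a%:P + cst s * T.
Proof. exact: ev3U. Qed.
Lemma FmapV a b c d r s : Fmap a b c d r s V = b%:P + cst r * T.
Proof. exact: ev3V. Qed.
Lemma FmapK a b c d r s (x : Q) :
  Fmap a b c d r s x%:P = ev2 (a%:P + cst s * T) (b%:P + cst r * T) x.
Proof. exact: ev3K. Qed.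
Lemma FmapT a b c d r s :
  Fmap a b c d r s T = V * Fmap a b c d r s c%:P - U * Fmap a b c d r s d%:P.
Proof. by rewrite !FmapK; exact: ev3T. Qed.
Lemma FmapC a b c d r s x : Fmap a b c d r s (cst x) = cst x.
Proof. exact: ev3C. Qed.

Lemma Fmap_rel a b c d r s r' s' (q : P) :
  cst r * a%:P - cst s * b%:P - 1 = q * relAB r' s' ->
  Fmap a b c d r s (relAB r s) = q * relAB r' s'.
Proof.
move=> e; rewrite -e.
set F := Fmap a b c d r s.
have -> : relAB r s = cst r * U - cst s * V - 1 by [].
rewrite !(rmorphB F) (rmorph1 F) (rmorphM F (cst r)) (rmorphM F (cst s)).
rewrite /F (FmapC a b c d r s r) (FmapC a b c d r s s) FmapU FmapV.
ring.
Qed.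

Lemma Fmap_wd a b c d r s r' s' (q : P) :
  cst r * a%:P - cst s * b%:P - 1 = q * relAB r' s' ->
  forall x y, cong_mod (relAB r s) x y ->
  cong_mod (relAB r' s') (Fmap a b c d r s x) (Fmap a b c d r s y).
Proof.
move=> e x y. apply: cm_hom. rewrite (Fmap_rel _ _ _ _ _ _ _ _ _ e).
by exists q; rewrite subr0.
Qed.

Lemma roundtrip r s r' s' (al be ga de qa qg : P) (al0 be0 ga0 de0 : Q) :
  al = al0%:P -> be = be0%:P -> ga = ga0%:P -> de = de0%:P ->
  cst r' * al - cst s' * be - 1 = qa * relAB r s ->
  cst r * ga - cst s * de - 1 = qg * relAB r' s' ->
  forall x, cong_mod (relAB r s)
    (Fmap al0 be0 ga0 de0 r' s' (Fmap ga0 de0 al0 be0 r s x)) x.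
Proof.
move=> Eal Ebe Ega Ede ha hg.
have GU := FmapU al0 be0 ga0 de0 r' s'.
have GV := FmapV al0 be0 ga0 de0 r' s'.
have GT := FmapT al0 be0 ga0 de0 r' s'.
have FU := FmapU ga0 de0 al0 be0 r s.
have FV := FmapV ga0 de0 al0 be0 r s.
have FT := FmapT ga0 de0 al0 be0 r s.
have GC := FmapC al0 be0 ga0 de0 r' s'.
have FC := FmapC ga0 de0 al0 be0 r s.
rewrite -Eal -Ebe -Ega -Ede in GU GV GT FU FV FT.
set G := Fmap al0 be0 ga0 de0 r' s' in GU GV GT GC *.
set F := Fmap ga0 de0 al0 be0 r s in FU FV FT FC *.
clearbody G F.
set f := relAB r s.
have Gg : G (relAB r' s') = qa * f.
  rewrite /relAB (rmorphB G) (rmorphB G) (rmorph1 G) (rmorphM G) (rmorphM G) !GC GU GV.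
  rewrite -[qa * f]/(qa * relAB r s) -ha; ring.
have rel : cst r * G ga - cst s * G de - 1 = G qg * (qa * f).
  rewrite -Gg -(rmorphM G) -hg (rmorphB G) (rmorphB G) (rmorph1 G).
  by rewrite (rmorphM G) (rmorphM G) !GC.
pose H : {rmorphism P -> P} := (G \o F)%FUN.
have HC : forall c, H (cst c) = cst c by move=> c; rewrite /H /= FC GC.
have HU : cong_mod f (H U) U.
  rewrite /H /= FU (rmorphD G) (rmorphM G) GC GT.
  exists (- G ga + U * G qg * qa).
  have -> : (- G ga + U * G qg * qa) * f = - G ga * f + U * (G qg * (qa * f)) by ring.
  by rewrite -rel /f /relAB; ring.
have HV : cong_mod f (H V) V.
  rewrite /H /= FV (rmorphD G) (rmorphM G) GC GT.
  exists (- G de + V * G qg * qa).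
  have -> : (- G de + V * G qg * qa) * f = - G de * f + V * (G qg * (qa * f)) by ring.
  by rewrite -rel /f /relAB; ring.
have HT : cong_mod f (H T) T.
  rewrite /H /= FT (rmorphB G) (rmorphM G) (rmorphM G) GU GV.
  have Hal : cong_mod f (H al) al by rewrite Eal; exact: (agree2 _ H HC HU HV).
  have Hbe : cong_mod f (H be) be by rewrite Ebe; exact: (agree2 _ H HC HU HV).
  apply: (@cm_trans _ _ ((be + cst r' * T) * al - (al + cst s' * T) * be)).
    apply: cm_add; first exact: cm_mull.
    by apply: cm_opp; apply: cm_mull.
  exists (T * qa); rewrite -mulrA -[qa * f]/(qa * relAB r s) -ha; ring.
exact: (agree3 _ H HC HU HV HT).
Qed.

Lemma in_rad2_self (a b : R) : in_rad2 a b a.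
Proof. by exists 1%N, 1, 0; rewrite expr1 mul1r mul0r addr0. Qed.

Lemma exist_ab r s r' s' : in_rad2 r' s' r -> in_rad2 r' s' s ->
  exists (al0 be0 : Q) (qa : P),
    cst r' * al0%:P - cst s' * be0%:P - 1 = qa * relAB r s.
Proof.
move=> hr hs.
pose I x := exists (al0 be0 : Q) (q : P),
  x = cst r' * al0%:P - cst s' * be0%:P + q * relAB r s.
have Imul : forall (c : Q) x, I x -> I (c%:P * x).
  move=> c x [a [b [q ->]]]; exists (c * a), (c * b), (c%:P * q).
  rewrite !polyCM; ring.
have Iadd : forall x y, I x -> I y -> I (x + y).
  move=> x y [a [b [q ->]]] [a' [b' [q' ->]]]; exists (a + a'), (b + b'), (q + q').
  rewrite !polyCD; ring.
have Iaddf : forall x q, I x -> I (x + q * relAB r s).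
  move=> x q' [a [b [q ->]]]; exists a, b, (q + q'); ring.
have Ibase : forall c, in_rad2 r' s' c -> exists k, I (cst c ^+ k).
  move=> c [k [u [v e]]]; exists k; exists u%:P%:P, (- v)%:P%:P, 0.
  rewrite /cstUVT -rmorphXn -rmorphXn -rmorphXn e.
  rewrite !rmorphD !rmorphM !rmorphN; ring.
have [k Ik] := Ibase r hr.
have [l Il] := Ibase s hs.
pose A : Q := r%:P%:P * ('X : {poly R})%:P.
pose B : Q := s%:P%:P * 'X.
have EA : cst r * U = A%:P by rewrite /A polyCM.
have EB : cst s * V = B%:P by rewrite /B polyCM.
have Ia : I ((cst r * U) ^+ k).
  rewrite exprMn mulrC.
  have -> : U ^+ k = ((('X : {poly R})%:P ^+ k : Q))%:P by rewrite rmorphXn.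
  exact: Imul.
have Ib : I ((cst s * V) ^+ l).
  rewrite exprMn mulrC.
  have -> : V ^+ l = ((('X : Q) ^+ l : Q))%:P by rewrite rmorphXn.
  exact: Imul.
have key : forall n i j, (i + j + n = k + l)%N ->
    I ((cst r * U) ^+ i * (cst s * V) ^+ j).
  elim=> [|n IH] i j hij.
    case: (leqP k i) => hk.
      rewrite -(subnK hk) exprD.
      have -> : (cst r * U) ^+ (i - k) * (cst r * U) ^+ k * (cst s * V) ^+ j =
        (A ^+ (i - k) * B ^+ j)%:P * (cst r * U) ^+ k.
        by rewrite EA EB; apply: polyC_aux1.
      exact: Imul.
    have hl : (l <= j)%N by rewrite addn0 in hij; lia.
    rewrite -(subnK hl) exprD.
    have -> : (cst r * U) ^+ i * ((cst s * V) ^+ (j - l) * (cst s * V) ^+ l) =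
      (A ^+ i * B ^+ (j - l))%:P * (cst s * V) ^+ l.
      by rewrite EA EB; apply: polyC_aux2.
    exact: Imul.
  have e : (cst r * U) ^+ i * (cst s * V) ^+ j =
     (cst r * U) ^+ i.+1 * (cst s * V) ^+ j
     + ((-1 : Q)%:P * ((cst r * U) ^+ i * (cst s * V) ^+ j.+1))
     + (- ((cst r * U) ^+ i * (cst s * V) ^+ j)) * relAB r s.
    by rewrite !exprS rmorphN1 /relAB; ring.
  rewrite e; apply: Iaddf; apply: Iadd; first by apply: IH; lia.
  by apply: Imul; apply: IH; lia.
have [a [b [q e]]] := key (k + l)%N 0%N 0%N (erefl _).
have e0 : (cst r * U) ^+ 0 * (cst s * V) ^+ 0 = 1 by rewrite !expr0 mulr1.
have {}e := etrans (esym e0) e.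
exists a, b, (- q).
move: (cst r' * a%:P) (cst s' * b%:P) (relAB r s) e => X Y Z e.
by rewrite [in LHS]e; ring.
Qed.

End S.
Arguments Fmap {R}.
Arguments roundtrip {R r s r' s' al be ga de qa qg al0 be0 ga0 de0}.
Arguments Fmap_wd {R a b c d r s r' s' q}.
Arguments exist_ab {R r s r' s'}.
Arguments in_rad2_self {R}.
Arguments FmapC {R}.
Arguments cm_eq {R h x y}.
Arguments cm_trans {R h x y z}.
Arguments cm_sym {R h x y}.

Theorem mainTheorem4 (Rr : realType) (R : idomainType)
    (iota : {rmorphism CC Rr -> R}) (hfg : fg_algebra iota)
    (r s r' s' : R) (hrad : same_rad2 r s r' s') :
  AT_iso r s r' s'.
Proof.
have hr : in_rad2 r' s' r by apply/hrad; apply: in_rad2_self.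
have hs : in_rad2 r' s' s.
  by apply/hrad; exists 1%N, 0, 1; rewrite expr1 mul1r mul0r add0r.
have hr' : in_rad2 r s r' by apply/hrad; apply: in_rad2_self.
have hs' : in_rad2 r s s'.
  by apply/hrad; exists 1%N, 0, 1; rewrite expr1 mul1r mul0r add0r.
have [al [be [qa ha]]] := exist_ab hr hs.
have [ga [de [qg hg]]] := exist_ab hr' hs'.
exists (Fmap ga de al be r s); split; [|split; [|split; [|split; [|split]]]].
- exact: Fmap_wd hg.
- by move=> x y; apply: cm_eq; rewrite rmorphD.
- by move=> x y; apply: cm_eq; rewrite rmorphM.
- by move=> c; apply: cm_eq; rewrite FmapC.
- move=> x y hxy.
  have := Fmap_wd (c := ga) (d := de) ha _ _ hxy.
  have h1 := roundtrip (erefl al%:P) (erefl be%:P) (erefl ga%:P) (erefl de%:P) ha hg x.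
  have h2 := roundtrip (erefl al%:P) (erefl be%:P) (erefl ga%:P) (erefl de%:P) ha hg y.
  move=> h; apply: cm_trans (cm_sym h1) _; apply: cm_trans h h2.
- move=> y; exists (Fmap al be ga de r' s' y).
  exact: roundtrip (erefl ga%:P) (erefl de%:P) (erefl al%:P) (erefl be%:P) hg ha y.
Qed.
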